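(* Let $\underline{\mathcal M}=(\mathcal M_n)_n$ be a sequence of $(\Delta,\Omega,\Psi,\Theta)$-models of high girth that converges locally to $\theta\in\mathcal P(\mathfrak T)$, and let $p$ be a marginal assignment. For every $\varepsilon>0$ there exists $\delta>0$ such that for every $\ell>0$ there exists $n_0$ such that for all $n>n_0$ the following holds. If $G\in\mathcal G(\mathcal M_n)$ satisfies $\frac1n\sum_{x\in V_n}\big\langle\|\langle\boldsymbol\sigma[\cdot|x]\mid\nabla_\ell(G,x)\rangle_{\mu_G}-p_{\ell,\partial^\ell[G,x]}\|_{TV}\big\rangle_{\mu_G}<\delta^9$, then $\mu_G$ is $(\varepsilon,2)$-symmetric and $\sum_{x\in V_n}\|\mu_{G\downarrow x}-p_{\ell,\partial^\ell[G,x]}\|_{TV}<\varepsilon n$.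
   Context: Fix an integer $\Delta>0$, finite nonempty sets $\Omega,\Theta$ and a finite set $\Psi$ of functions $\psi:\Omega^h\to(0,\infty)$, $h\in\{1,\dots,\Delta\}$. A $(\Delta,\Omega,\Psi,\Theta)$-model $\mathcal M=(V,F,d,t,(\psi_a)_{a\in F})$: countable sets $V,F$ of variable/constraint nodes; $d:V\cup F\to\{1,\dots,\Delta\}$, $\sum_Vd=\sum_Fd$; clones $C_V=\bigcup_x\{x\}\times[d(x)]$, $C_F=\bigcup_a\{a\}\times[d(a)]$; $t:C_V\cup C_F\to\Theta$ with $|t^{-1}(\theta)\cap C_V|=|t^{-1}(\theta)\cap C_F|$; $\psi_a\in\Psi$, $\psi_a:\Omega^{d(a)}\to(0,\infty)$; size $|V|$. An $\mathcal M$-factor graph is a type-preserving bijection $G:C_V\to C_F$, viewed as a bipartite multigraph on $V\cup F$ (distances refer to it); $\partial(G,a,j)$ the variable matched to $(a,j)$; $\mu_G(\sigma)\propto\prod_a\psi_a(\sigma(\partial(G,a,1)),\dots,\sigma(\partial(G,a,d(a))))$ for $\sigma:V\to\Omega$ (Gibbs measure), $\langle\cdot\rangle_{\mu_G}$ its expectation, $\mu_{G\downarrow S}$ marginal; $\boldsymbol\sigma[\omega|x]=\mathbf 1\{\boldsymbol\sigma(x)=\omega\}$. $\nabla_\ell(G,x)$ is the $\sigma$-algebra on $\Omega^{V}$ generated by the events $\{\boldsymbol\sigma(y)=\omega\}$ for $\omega\in\Omega$ and $y$ at distance $\ell$ or $\ell+1$ from $x$; $\langle\cdot|\nabla_\ell(G,x)\rangle_{\mu_G}$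 is conditional expectation. Templates, classes up to isomorphism (preserving root, node kinds, degrees, clone types, weight functions, clone-indexed adjacencies); $\mathfrak T$ acyclic classes, $\mathcal V$/$\mathcal F$ rooted at variable/constraint nodes; $d_T$, $\psi_T$, $T\uparrow j$ (re-rooting at the neighbour on the root's $j$-th clone), $\partial^\ell T$ truncation at depth $\ell$, $\partial^\ell[G,v]$ depth-$\ell$ neighbourhood of $v$ rooted at $v$. $\mathcal M_n=(V_n,F_n,\dots)$ has size $n$; $\mathbf G$ uniform on $\mathcal G(\mathcal M_n)$. Local convergence: $\lim_n\mathbb E\|\lambda_{\mathbf G,\ell}-\theta_\ell\|_{TV}=0$ $\forall\ell\ge1$, $\lambda_{G,\ell}=(|V_n|+|F_n|)^{-1}(\sum_x\delta_{\partial^\ell[G,x]}+\sum_a\delta_{\partial^{\ell+1}[G,a]})$, $\theta_\ell$ the image of $\theta$ under $T\mapsto\partial^\ell T$ ($T\in\mathcal V$), $\partial^{\ell+1}T$ ($T\in\mathcal F$); $\mathbf T\sim\theta$. High girth: for all $\ell,l>0$, $\liminf_n\Pr[\mathbf G$ has no cycle of length $\le l]>0$ and likewise for the planted graph $\hat{\mathbf G}_\ell$ with $\Pr[\hat{\mathbf G}_\ell=G]=Z(G)/(|\mathcal G(\mathcal M_n)|\mathbb E[Z(\mathbf G)|\mathbf G\cong_\ell G])$, where $G\cong_\ell G'$ iff all depth-$\ell$ variable and depth-$(\ell+1)$ constraint neighbourhoods agree and $Z$ is the normalizing constant of $\mu_G$. Marginal assignment: measurable $T\mapsto p_T$, $p_T\in\mathcal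 P(\Omega)$ for $T\in\mathcal V$; for $T\in\mathcal F$, $p_T\in\mathcal P(\Omega^{d_T})$ with $j$-th marginal $p_{T\uparrow j}$ maximizing $H(\nu)+\langle\ln\psi_T(\boldsymbol\sigma)\rangle_\nu$ among $\nu$ with these marginals. $p_{\ell,T}=\mathbb E[p_{\mathbf T}|\partial^\ell\mathbf T=T]$ for $T=\partial^\ell T_0$, $T_0\in\mathfrak T\cap\mathcal V$; $p_{\ell,T}$ uniform for non-acyclic $T$. A measure $\mu$ on $\Omega^{V_n}$ is $(\varepsilon,2)$-symmetric if $\frac1{n^2}\sum_{x,y\in V_n}\|\mu_{\downarrow\{x,y\}}-\mu_{\downarrow x}\otimes\mu_{\downarrow y}\|_{TV}<\varepsilon$, where $\mu_{\downarrow\{x,y\}}$ is the law of $(\boldsymbol\sigma(x),\boldsymbol\sigma(y))$. *)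

(* Defs.v *)
From HB Require Import structures.
From mathcomp Require Import all_boot all_order all_algebra.
From mathcomp Require Import all_classical all_reals all_analysis.

Set Implicit Arguments.
Unset Strict Implicit.
Unset Printing Implicit Defensive.

Import Order.TTheory GRing.Theory Num.Theory.
Local Open Scope classical_set_scope.
Local Open Scope ring_scope.

(* Because isomorphisms preserve clone-indexed adjacencies, an acyclic       *)
(* rooted template is canonically encoded by its "address function": the    *)
(* node reached from the root by following clone indices i1, i2, ... is      *)
(* stored at address [:: i1; i2; ...].  A node label records the clone      *)
(* types (their number is the degree), the weight function (None for a      *)
(* variable node, Some psi for a constraint node) and the index of the clone *)
(* through which the node is attached to its parent (None for the root).     *)
(* Clone indices are 0-based.                                                 *)

Section Templates.
Variables (Theta PsiI : finType).

Definition label := (seq Theta * option PsiI * option nat)%type.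

Definition templ := seq nat -> option label.
HB.instance Definition _ := gen_eqMixin templ.
HB.instance Definition _ := gen_choiceMixin templ.
HB.instance Definition _ := isPointed.Build templ (fun _ => None).

Definition trunc (k : nat) (T : templ) : templ :=
  fun s => if (size s <= k)%N then T s else None.

Definition root_is_var (T : templ) : bool :=
  if T [::] is Some (_, None, _) then true else false.

Definition trunc_for (l : nat) (T : templ) : templ :=
  if root_is_var T then trunc l T else trunc l.+1 T.

Definition lab_ok (Delta : nat) (ar : PsiI -> nat) (lb : label) : Prop :=
  let: (ts, k, _) := lb in
  (0 < size ts <= Delta)%N /\ (forall psi, k = Some psi -> size ts = ar psi).

(* T encodes an element of \mathfrak T (an acyclic template, possibly infinite) *)
Definition wf_templ (Delta : nat) (ar : PsiI -> nat) (T : templ) : Prop :=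
  (exists ts k, T [::] = Some (ts, k, None)) /\
  (forall s lb, T s = Some lb -> lab_ok Delta ar lb) /\
  (forall s i,
     match T s with
     | None => T (rcons s i) = None
     | Some (ts, k, u) =>
         if (i < size ts)%N && (Some i != u) then
           exists ts' k' j, T (rcons s i) = Some (ts', k', Some j) /\
             (j < size ts')%N /\ (k == None) = (k' != None) /\
             onth ts i = onth ts' j
         else T (rcons s i) = None
     end).

(* re-rooting T |-> T \uparrow j at the neighbour on the root's j-th clone *)
Definition reroot (T : templ) (j : nat) : templ := fun s =>
  match T [:: j] with
  | Some (ts, kd, Some k) =>
      match s with
      | [::] => Some (ts, kd, None)
      | i :: s' =>
          if i == k then
            match s' with
            | [::] => omap (fun lb : label => let: (ts0, k0, _) := lb in
                                             (ts0, k0, Some j)) (T [::])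
            | i2 :: _ => if i2 == j then None else T s'
            end
          else T (j :: s)
      end
  | _ => None
  end.

Definition tgen : set (set templ) :=
  [set A | exists k (B : set templ), A = trunc k @^-1` B].

Definition TT := g_sigma_algebraType tgen.

End Templates.

Section Models.
Variables (Delta : nat) (Theta PsiI : finType) (ar : PsiI -> nat).

(* V = 'I_nV, F = 'I_nF (F is finite since degrees are >= 1);
   tV x j / tF a j = type of the clone (x,j) / (a,j) (only j < degree used) *)
Record model := Model {
  nV : nat; nF : nat;
  dV : 'I_nV -> nat; dF : 'I_nF -> nat;
  tV : 'I_nV -> nat -> Theta; tF : 'I_nF -> nat -> Theta;
  wF : 'I_nF -> PsiI }.

Definition CV (M : model) := {x : 'I_(nV M) & 'I_(dV x)}.
Definition CF (M : model) := {a : 'I_(nF M) & 'I_(dF a)}.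

Definition model_ok (M : model) : Prop :=
  (forall x : 'I_(nV M), (0 < dV x <= Delta)%N) /\
  (forall a : 'I_(nF M), (0 < dF a <= Delta)%N) /\
  (forall a : 'I_(nF M), dF a = ar (wF a)) /\
  (\sum_(x : 'I_(nV M)) dV x = \sum_(a : 'I_(nF M)) dF a)%N /\
  (forall th : Theta,
     #|[set c : {: CV M} | tV (tag c) (tagged c) == th]| =
     #|[set c : {: CF M} | tF (tag c) (tagged c) == th]|).

Definition fgraphs (M : model) : {set {ffun CV M -> CF M}} :=
  [set G : {ffun CV M -> CF M} | [&& injectiveb G,
     [forall b, exists c, G c == b] &
     [forall c, tF (tag (G c)) (tagged (G c)) == tV (tag c) (tagged c)]]].

Definition node (M : model) := ('I_(nV M) + 'I_(nF M))%type.

Section Graph.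
Variables (M : model) (G : {ffun CV M -> CF M}).

Definition joins (c : CV M) (u v : node M) : bool :=
  ((u == inl (tag c)) && (v == inr (tag (G c)))) ||
  ((v == inl (tag c)) && (u == inr (tag (G c)))).

Definition adj (u v : node M) : bool := [exists c, joins c u v].

Fixpoint within (k : nat) (u v : node M) : bool :=
  match k with
  | 0 => u == v
  | k'.+1 => within k' u v || [exists w, within k' u w && adj w v]
  end.

(* a cycle of length L (L >= 2; length-2 cycles are double edges) all of
   whose nodes satisfy P *)
Definition cycle_in (L : nat) (P : node M -> Prop) : Prop :=
  (2 <= L)%N /\ exists (ns : 'I_L -> node M) (es : 'I_L -> CV M),
    injective ns /\ injective es /\ (forall i, P (ns i)) /\
    forall i, joins (es i) (ns i) (ns (ordS i)).

Definition no_short_cycle (l : nat) : Prop :=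
  ~ exists L, (L <= l)%N /\ cycle_in L (fun _ => True).

Definition ball_cyclic (v : node M) (k : nat) : Prop :=
  exists L, cycle_in L (fun u => within k v u).

Definition deg (u : node M) : nat :=
  match u with inl x => dV x | inr a => dF a end.

Definition step (u : node M) (i : nat) : option (node M * option nat) :=
  match u with
  | inl x => omap (fun c : CV M => (inr (tag (G c)), Some (nat_of_ord (tagged (G c)))))
               [pick c : CV M | (tag c == x) && (tagged c == i :> nat)]
  | inr a => omap (fun c : CV M => (inl (tag c), Some (nat_of_ord (tagged c))))
               [pick c : CV M | (tag (G c) == a) && (tagged (G c) == i :> nat)]
  end.

Definition walk (v : node M) (s : seq nat) : option (node M * option nat) :=
  foldl (fun o i => obind (fun p : node M * option nat =>
           if (i < deg p.1)%N && (Some i != p.2) then step p.1 i else None) o)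
        (Some (v, None)) s.

Definition node_label (u : node M) (up : option nat) : label Theta PsiI :=
  match u with
  | inl x => ([seq tV x j | j <- iota 0 (dV x)], None, up)
  | inr a => ([seq tF a j | j <- iota 0 (dF a)], Some (wF a), up)
  end.

Definition unfold (v : node M) (k : nat) : templ Theta PsiI := fun s =>
  if (size s <= k)%N then omap (fun p => node_label p.1 p.2) (walk v s) else None.

(* the class of \partial^k[G,v]; None stands for any non-acyclic class *)
Definition nbhd (v : node M) (k : nat) : option (templ Theta PsiI) :=
  if `[< ball_cyclic v k >] then None else Some (unfold v k).

Definition matched (x : 'I_(nV M)) (i : nat) (a : 'I_(nF M)) (j : nat) : bool :=
  [exists c : CV M, [&& (tag c) == x, (tagged c) == i :> nat,
                        (tag (G c)) == a & (tagged (G c)) == j :> nat]].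

End Graph.

Definition ball_iso (M : model) (G G' : {ffun CV M -> CF M}) (v : node M) (k : nat) : Prop :=
  exists (fV : 'I_(nV M) -> 'I_(nV M)) (fF : 'I_(nF M) -> 'I_(nF M)),
    let f (u : node M) : node M :=
      match u with inl x => inl (fV x) | inr a => inr (fF a) end in
    f v = v /\
    (forall u, within G k v u -> within G' k v (f u)) /\
    (forall u u', within G k v u -> within G k v u' -> f u = f u' -> u = u') /\
    (forall u', within G' k v u' -> exists u, within G k v u /\ f u = u') /\
    (forall x, within G k v (inl x) ->
       dV (fV x) = dV x /\ forall j, (j < dV x)%N -> tV (fV x) j = tV x j) /\
    (forall a, within G k v (inr a) ->
       [/\ dF (fF a) = dF a, wF (fF a) = wF a &
           forall j, (j < dF a)%N -> tF (fF a) j = tF a j]) /\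
    (forall x a i j, within G k v (inl x) -> within G k v (inr a) ->
       matched G x i a j = matched G' (fV x) i (fF a) j).

Definition iso_l (M : model) (G G' : {ffun CV M -> CF M}) (l : nat) : Prop :=
  (forall x, ball_iso G G' (inl x) l) /\ (forall a, ball_iso G G' (inr a) l.+1).

End Models.

Section Gibbs.
Variables (R : realType) (Delta : nat) (Omega Theta PsiI : finType).
Variables (psi : PsiI -> seq Omega -> R).

Definition tv (T : finType) (p q : T -> R) : R := 2^-1 * \sum_t `|p t - q t|.

Definition is_distr (T : finType) (q : T -> R) : Prop :=
  (forall t, 0 <= q t) /\ \sum_t q t = 1.

Section OnModel.
Variables (M : model Theta PsiI) (G : {ffun CV M -> CF M}).

Definition config := {ffun 'I_(nV M) -> Omega}.

Definition partner (a : 'I_(nF M)) (j : nat) : option 'I_(nV M) :=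
  omap (fun c : CV M => (tag c))
    [pick c : CV M | (tag (G c) == a) && (tagged (G c) == j :> nat)].

Definition weight (sg : config) : R :=
  \prod_(a : 'I_(nF M)) psi (wF a) [seq sg y | y <- pmap (partner a) (iota 0 (dF a))].

Definition Zpart : R := \sum_(sg : config) weight sg.

Definition gibbs (sg : config) : R := weight sg / Zpart.

Definition marg (x : 'I_(nV M)) (w : Omega) : R :=
  \sum_(sg : config | sg x == w) gibbs sg.

Definition marg2 (x y : 'I_(nV M)) (w : Omega * Omega) : R :=
  \sum_(sg : config | (sg x == w.1) && (sg y == w.2)) gibbs sg.

Definition symmetric2 (eps : R) : Prop :=
  (nV M)%:R ^- 2 * \sum_(x : 'I_(nV M)) \sum_(y : 'I_(nV M))
     tv (marg2 x y) (fun w => marg x w.1 * marg y w.2) < eps.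

Definition boundary (x : 'I_(nV M)) (l : nat) (y : 'I_(nV M)) : bool :=
  within G l.+1 (inl x) (inl y) && ~~ within G l.-1 (inl x) (inl y).

(* <sigma[w|x] | nabla_l(G,x)>_{mu_G} evaluated at the configuration sg *)
Definition cond_marg (x : 'I_(nV M)) (l : nat) (sg : config) (w : Omega) : R :=
  let agree (tau : config) := [forall y, boundary x l y ==> (tau y == sg y)] in
  (\sum_(tau : config | agree tau && (tau x == w)) gibbs tau) /
  (\sum_(tau : config | agree tau) gibbs tau).

End OnModel.

Definition avgG (M : model Theta PsiI) (f : {ffun CV M -> CF M} -> R) : R :=
  (\sum_(G in fgraphs M) f G) / #|fgraphs M|%:R.

Definition planted_prob (M : model Theta PsiI) (l : nat) (G : {ffun CV M -> CF M}) : R :=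
  let cls := [set G' in fgraphs M | `[< iso_l G G' l >]] in
  Zpart G / (#|fgraphs M|%:R * ((\sum_(G' in cls) Zpart G') / #|cls|%:R)).

Definition high_girth (Ms : nat -> model Theta PsiI) : Prop :=
  forall l lc : nat, (0 < l)%N -> (0 < lc)%N ->
    0 < limn_inf (fun n => avgG (M := Ms n) (fun G => if `[< no_short_cycle G lc >] then 1 else 0)) /\
    0 < limn_inf (fun n => \sum_(G in fgraphs (Ms n) | `[< no_short_cycle G lc >])
                             planted_prob l G).

End Gibbs.

Section Limits.
Variables (R : realType) (Delta : nat) (Omega Theta PsiI : finType).
Variables (ar : PsiI -> nat) (psi : PsiI -> seq Omega -> R).

Local Notation TTy := (TT Theta PsiI).

Definition lambdaG (M : model Theta PsiI) (G : {ffun CV M -> CF M}) (l : nat)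
    (A : set (option (templ Theta PsiI))) : R :=
  (\sum_(x : 'I_(nV M)) (\1_A (nbhd G (inl x) l) : R) +
   \sum_(a : 'I_(nF M)) (\1_A (nbhd G (inr a) l.+1) : R)) / (nV M + nF M)%:R.

Definition theta_l (th : probability TTy R) (l : nat)
    (A : set (option (templ Theta PsiI))) : R :=
  fine (th [set T : TTy | A (Some (trunc_for l T))]).

Definition tv_local (th : probability TTy R) (l : nat)
    (M : model Theta PsiI) (G : {ffun CV M -> CF M}) : R :=
  sup (range (fun A => `|lambdaG G l A - theta_l th l A|)).

Definition local_conv (Ms : nat -> model Theta PsiI) (th : probability TTy R) : Prop :=
  forall l, (0 < l)%N ->
    (fun n => avgG (tv_local th l (M := Ms n)) : R^o) @ \oo --> (0 : R^o).

Definition ent_obj (d : nat) (k : PsiI) (q : d.-tuple Omega -> R) : R :=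
  \sum_s (- (q s * ln (q s))) + \sum_s q s * ln (psi k s).

Definition tmarg (d : nat) (q : d.-tuple Omega -> R) (j : 'I_d) (w : Omega) : R :=
  \sum_(s : d.-tuple Omega | tnth s j == w) q s.

(* p = (pV, pF): pV T = p_T for T in V, pF T restricted to (d_T)-tuples = p_T
   for T in F *)
Definition marg_assign (pV : TTy -> Omega -> R) (pF : TTy -> seq Omega -> R) : Prop :=
  [/\ (forall w, measurable_fun setT (fun T : TTy => pV T w)),
      (forall s, measurable_fun setT (fun T : TTy => pF T s)),
      (forall T : TTy, wf_templ Delta ar T -> root_is_var T -> is_distr (pV T)) &
      (forall (T : TTy) ts k, wf_templ Delta ar T -> T [::] = Some (ts, Some k, None) ->
         let q := fun s : (size ts).-tuple Omega => pF T s in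
         [/\ is_distr q,
             (forall j w, tmarg q j w = pV (reroot T j) w) &
             (forall nu : (size ts).-tuple Omega -> R, is_distr nu ->
                (forall j w, tmarg nu j w = pV (reroot T j) w) ->
                ent_obj k nu <= ent_obj k q)])].

(* p_{l,T}; uniform for non-acyclic T (None) and, by convention, when the
   conditioning event has probability zero *)
Definition p_l (th : probability TTy R) (pV : TTy -> Omega -> R) (l : nat)
    (oT : option (templ Theta PsiI)) (w : Omega) : R :=
  match oT with
  | Some T =>
      let E := [set T' : TTy | trunc l T' = T] in
      if 0 < fine (th E)
      then fine (\int[th]_(t in E) (pV t w)%:E) / fine (th E)
      else #|Omega|%:R^-1
  | None => #|Omega|%:R^-1
  end.

Definition psi_ok : Prop :=
  (forall k, (0 < ar k <= Delta)%N) /\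
  (forall k s, size s = ar k -> 0 < psi k s) /\
  (forall k k', ar k = ar k' -> (forall s, size s = ar k -> psi k s = psi k' s) -> k = k').

End Limits.

(* Main.v *)
Require Import Defs.
From HB Require Import structures.
From mathcomp Require Import all_boot all_order all_algebra.
From mathcomp Require Import all_classical all_reals all_analysis.
From mathcomp Require Import ring lra.
Import Order.TTheory GRing.Theory Num.Theory.

Section GraphLemmas.
Variables (Theta PsiI : finType) (M : model Theta PsiI) (G : {ffun CV M -> CF M}).

Lemma within_refl k u : Defs.within G k u u.
Proof. by elim: k => [|k IH] /=; rewrite ?eqxx ?IH. Qed.

Lemma within_S k u v : Defs.within G k u v -> Defs.within G k.+1 u v.
Proof. by move=> h /=; rewrite h. Qed.

Lemma within_mono k k' u v : (k <= k')%N -> Defs.within G k u v -> Defs.within G k' u v.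
Proof.
move=> le; elim: k' le => [|k' IH]; first by rewrite leqn0 => /eqP ->.
rewrite leq_eqVlt => /orP [/eqP -> //|lt h]; apply: within_S; exact: IH.
Qed.

Lemma within_step k u w v : Defs.within G k u w -> adj G w v -> Defs.within G k.+1 u v.
Proof. by move=> h1 h2 /=; apply/orP; right; apply/existsP; exists w; rewrite h1. Qed.

End GraphLemmas.
Arguments within_refl {Theta PsiI M G} k u.
Arguments within_S {Theta PsiI M G k u v}.
Arguments within_mono {Theta PsiI M G k k' u v}.
Arguments within_step {Theta PsiI M G k u w v}.

Section Ball.
Variables (Delta : nat) (Theta PsiI : finType) (ar : PsiI -> nat) (M : model Theta PsiI) (G : {ffun CV M -> CF M}).
Hypothesis hM : model_ok Delta ar M.
Hypothesis hG : G \in fgraphs M.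

Lemma card_nbr w : (#|[set v | adj G w v]| <= Delta)%N.
Proof.
have [hV [hF _]] := hM.
move: hG; rewrite inE => /and3P [/injectiveP Ginj _ _].
case: w => [x|a].
- pose f (j : 'I_(dV x)) : node M := inr (tag (G (@existT _ (fun x0 : 'I_(nV M) => 'I_(dV x0)) x j))).
  apply: (@leq_trans #|[set f j | j in 'I_(dV x)]|).
    apply: subset_leq_card; apply/fintype.subsetP => v; rewrite inE => /existsP [c].
    rewrite /joins; case: c => [x' j] /=.
    case/orP => [/andP [/eqP [ex] /eqP ->]|/andP [_ /eqP //]].
    subst x'; by apply/imsetP; exists j.
  apply: (leq_trans (leq_imset_card _ _)); rewrite card_ord.
  by case/andP: (hV x).
- pose f (j : 'I_(dF a)) : node M :=
    if [pick c | G c == @existT _ (fun a0 : 'I_(nF M) => 'I_(dF a0)) a j] is Some c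
    then inl (tag c) else inr a.
  apply: (@leq_trans #|[set f j | j in 'I_(dF a)]|).
    apply: subset_leq_card; apply/fintype.subsetP => v; rewrite inE => /existsP [c].
    rewrite /joins.
    case/orP => [/andP [/eqP //]|/andP [/eqP -> /eqP]].
    case E: (G c) => [a' j] /= [ea]; subst a'.
    apply/imsetP; exists j => //; rewrite /f.
    case: pickP => [c' /eqP Hc'|none].
      by have -> : c' = c by apply: Ginj; rewrite Hc' E.
    by have := none c; rewrite E eqxx.
  apply: (leq_trans (leq_imset_card _ _)); rewrite card_ord.
  by case/andP: (hF a).
Qed.

Lemma card_ball u0 k : (#|[set u | Defs.within G k u0 u]| <= Delta.+1 ^ k)%N.
Proof.
elim: k => [|k IH].
  rewrite expn0; apply: (leq_trans (subset_leq_card (B := [set u0]) _)); last by rewrite cards1.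
  by apply/fintype.subsetP => u; rewrite !inE /= eq_sym.
set S := [set u | Defs.within G k u0 u].
have sub : [set u | Defs.within G k.+1 u0 u] \subset S :|: \bigcup_(w in S) [set v | adj G w v].
  apply/fintype.subsetP => v; rewrite !inE /= => /orP [->//|/existsP [w /andP [h1 h2]]].
  apply/orP; right; apply/bigcupP; exists w; by rewrite ?inE.
apply: (leq_trans (subset_leq_card sub)).
apply: (leq_trans (leq_card_setU _ _)).
have hU : (#|\bigcup_(w in S) [set v | adj G w v]| <= \sum_(w in S) Delta)%N.
  apply: (big_ind2 (fun (A : {set node M}) (m : nat) => #|A| <= m)%N).
  - by rewrite cards0.
  - move=> A1 m1 A2 m2 h1 h2; apply: (leq_trans (leq_card_setU _ _)); exact: leq_add.
  - move=> w _; exact: card_nbr.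
rewrite sum_nat_const in hU.
rewrite expnS mulSn.
apply: leq_add => //.
apply: (leq_trans hU); rewrite mulnC leq_mul2l IH orbT //.
Qed.

Lemma card_ballV x k : (#|[set y | Defs.within G k (inl x) (inl y)]| <= Delta.+1 ^ k)%N.
Proof.
apply: leq_trans (card_ball (inl x) k).
rewrite -(card_imset _ (f := @inl 'I_(nV M) 'I_(nF M))); last by move=> ? ? [].
apply: subset_leq_card; apply/fintype.subsetP => u /imsetP [y]; by rewrite !inE => h ->.
Qed.

End Ball.
Local Open Scope ring_scope.

Section Gibbs1.
Variables (R : realType) (Delta : nat) (Omega Theta PsiI : finType) (ar : PsiI -> nat)
  (psi : PsiI -> seq Omega -> R) (M : model Theta PsiI) (G : {ffun CV M -> CF M}).
Hypothesis hM : model_ok Delta ar M.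
Hypothesis hG : G \in fgraphs M.
Hypothesis hpsi : forall k s, size s = ar k -> 0 < psi k s.
Hypothesis hOm : (0 < #|Omega|)%N.

Lemma partner_some a j : (j < dF a)%N -> partner G a j != None.
Proof.
move=> hj; move: hG; rewrite inE => /and3P [_ /forallP hs _].
have /existsP [c /eqP Hc] := hs (@existT _ (fun a0 : 'I_(nF M) => 'I_(dF a0)) a (Ordinal hj)).
rewrite /partner; case: pickP => [c' _ //|none].
by have := none c; rewrite Hc /= !eqxx.
Qed.

Lemma size_partners a : size (pmap (partner G a) (iota 0 (dF a))) = dF a.
Proof.
rewrite size_pmap -[RHS](size_iota 0) -count_predT.
apply: eq_in_count => j; rewrite mem_iota add0n /= => hj.
by have := partner_some a j hj; case: (partner G a j).
Qed.

Lemma weight_gt0 sg : 0 < weight psi G sg.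
Proof.
apply: prodr_gt0 => a _; apply: hpsi.
rewrite size_map size_partners; by case: hM => _ [_ [h _]].
Qed.

Lemma Zpart_gt0 : 0 < Zpart psi G.
Proof.
have [w0 _] := card_gt0P hOm.
rewrite /Zpart (bigD1 [ffun _ => w0]) //= ltr_wpDr ?weight_gt0 //.
by apply: sumr_ge0 => ? _; apply/ltW/weight_gt0.
Qed.

Lemma gibbs_gt0 sg : 0 < gibbs psi G sg.
Proof. by rewrite /gibbs divr_gt0 ?weight_gt0 ?Zpart_gt0. Qed.

Lemma gibbs_ge0 sg : 0 <= gibbs psi G sg.
Proof. exact/ltW/gibbs_gt0. Qed.

Lemma sum_gibbs : \sum_sg gibbs psi G sg = 1.
Proof.
rewrite /gibbs -mulr_suml -/(Zpart psi G) mulfV //; exact/lt0r_neq0/Zpart_gt0.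
Qed.

Lemma partner_adj a j z : partner G a j = Some z ->
  adj G (inl z) (inr a) && adj G (inr a) (inl z).
Proof.
rewrite /partner; case: pickP => [c /andP [/eqP Ha _]|//] [<-].
by apply/andP; split; apply/existsP; exists c; rewrite /joins Ha !eqxx ?orbT.
Qed.

Section Cond.
Variables (x : 'I_(nV M)) (l : nat).
Hypothesis hl : (0 < l)%N.

Definition agree (sg tau : config Omega M) :=
  [forall y, boundary G x l y ==> (tau y == sg y)].

Lemma agree_refl sg : agree sg sg.
Proof. by apply/forallP => y; rewrite eqxx implybT. Qed.

Lemma agree_sym s t : agree s t = agree t s.
Proof. by apply: eq_forallb => y; rewrite eq_sym. Qed.

Lemma agree_trans s t : agree s t -> forall u, agree s u = agree t u.
Proof.
move=> /forallP h u; apply: eq_forallb => y.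
have := h y; case: (boundary G x l y) => //= /eqP ->; done.
Qed.

Definition Dn (sg : config Omega M) := \sum_(tau | agree sg tau) gibbs psi G tau.

Lemma Dn_gt0 sg : 0 < Dn sg.
Proof.
rewrite /Dn (bigD1 sg) ?agree_refl //= ltr_wpDr ?gibbs_gt0 //.
by apply: sumr_ge0 => ? _; apply: gibbs_ge0.
Qed.

Lemma Dn_eq s t : agree s t -> Dn s = Dn t.
Proof. by move=> h; apply: eq_bigl => u; rewrite (agree_trans _ _ h). Qed.

Lemma lemmaA (k : config Omega M -> R) :
  \sum_t k t = \sum_sg gibbs psi G sg / Dn sg * \sum_(t | agree sg t) k t.
Proof.
under [RHS]eq_bigr do rewrite mulr_sumr.
rewrite (exchange_big_dep predT) //=.
apply: eq_bigr => t _.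
rewrite -[in RHS]mulr_suml.
have -> : \sum_(i | agree i t) gibbs psi G i / Dn i = 1.
  rewrite (eq_bigr (fun i => gibbs psi G i / Dn t)); last first.
    by move=> i hi; rewrite (Dn_eq _ _ hi).
  rewrite -mulr_suml (eq_bigl (agree t)); last by move=> i; rewrite agree_sym.
  by rewrite mulfV //; apply/lt0r_neq0/Dn_gt0.
by rewrite mul1r.
Qed.

Lemma cond_margE sg w : cond_marg psi G x l sg w =
  (\sum_(tau | agree sg tau && (tau x == w)) gibbs psi G tau) / Dn sg.
Proof. by []. Qed.

Lemma marg_cond w : marg psi G x w = \sum_sg gibbs psi G sg * cond_marg psi G x l sg w.
Proof.
rewrite /marg big_mkcond lemmaA; apply: eq_bigr => sg _.
rewrite cond_margE -big_mkcondr /= -mulrA; congr (_ * _); exact: mulrC.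
Qed.


Definition inner (z : 'I_(nV M)) := Defs.within G l.-1 (inl x) (inl z).
Definition hyb (t1 t2 : config Omega M) : config Omega M :=
  [ffun z => if inner z then t1 z else t2 z].
Definition Lp a := pmap (partner G a) (iota 0 (dF a)).
Definition fac a (t : config Omega M) := psi (wF a) [seq t y | y <- Lp a].

Lemma fac_eq a (t t' : config Omega M) : {in Lp a, t =1 t'} -> fac a t = fac a t'.
Proof. by move=> h; rewrite /fac; congr psi; apply/eq_in_map. Qed.

Lemma near_inner a z0 z : z0 \in Lp a -> inner z0 -> z \in Lp a ->
  Defs.within G l.+1 (inl x) (inl z).
Proof.
rewrite /Lp !mem_pmap => /mapP [j0 _ e0] hin /mapP [j _ e].
have /andP [a1 _] := partner_adj a j0 z0 (esym e0).
have /andP [_ a2] := partner_adj a j z (esym e).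
have := within_step (within_step hin a1) a2.
by rewrite prednK.
Qed.

Lemma fac_hyb a t1 t2 : agree t1 t2 ->
  fac a t1 * fac a t2 = fac a (hyb t1 t2) * fac a (hyb t2 t1).
Proof.
move=> /forallP hag.
case: (boolP (has inner (Lp a))) => [/hasP [z0 hz0 hin]| /hasPn hno].
- have eqz : {in Lp a, forall z, ~~ inner z -> t2 z = t1 z}.
    move=> z hz hi.
    have hb : boundary G x l z by rewrite /boundary (near_inner a z0 z hz0 hin hz) /= -/(inner z) hi.
    by have := hag z; rewrite hb => /eqP.
  rewrite (fac_eq a (hyb t1 t2) t1); last first.
    by move=> z hz; rewrite ffunE; case: ifPn => // hi; rewrite eqz.
  rewrite (fac_eq a (hyb t2 t1) t2) //.
  by move=> z hz; rewrite ffunE; case: ifPn => // hi; rewrite eqz.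
- rewrite (fac_eq a (hyb t1 t2) t2); last by move=> z hz; rewrite ffunE (negbTE (hno z hz)).
  rewrite (fac_eq a (hyb t2 t1) t1); last by move=> z hz; rewrite ffunE (negbTE (hno z hz)).
  exact: mulrC.
Qed.

Lemma gibbs_hyb t1 t2 : agree t1 t2 ->
  gibbs psi G t1 * gibbs psi G t2 = gibbs psi G (hyb t1 t2) * gibbs psi G (hyb t2 t1).
Proof.
move=> h; rewrite /gibbs mulrACA [RHS]mulrACA; congr (_ * _).
rewrite /weight -!big_split /=; apply: eq_bigr => a _; exact: fac_hyb.
Qed.

Lemma agree_hyb s t1 t2 : agree s (hyb t1 t2) = agree s t2.
Proof.
apply: eq_forallb => y; case hb: (boundary G x l y) => //=.
by move: hb; rewrite /boundary ffunE => /andP [_ /negbTE]; rewrite /inner => ->.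
Qed.

Lemma hybK t1 t2 : hyb (hyb t1 t2) (hyb t2 t1) = t1.
Proof. by apply/ffunP => z; rewrite !ffunE; case: (inner z). Qed.

Lemma hyb_x t1 t2 : hyb t1 t2 x = t1 x.
Proof. by rewrite ffunE /inner within_refl. Qed.

Lemma hyb_far t1 t2 y : ~~ Defs.within G l.+1 (inl x) (inl y) -> hyb t1 t2 y = t2 y.
Proof.
move=> hf; rewrite ffunE /inner; case: ifP => // hi.
by move: hf; rewrite (within_mono _ hi) // (leq_trans (leq_pred l)).
Qed.

Definition Phi (p : config Omega M * config Omega M) := (hyb p.1 p.2, hyb p.2 p.1).

Lemma Phi_inj : injective Phi.
Proof. by apply: (can_inj (g := Phi)) => [[t1 t2]]; rewrite /Phi /= !hybK. Qed.

Lemma factorize sg y a b : ~~ Defs.within G l.+1 (inl x) (inl y) ->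
  (\sum_(t | agree sg t && (t x == a) && (t y == b)) gibbs psi G t) * Dn sg =
  (\sum_(t | agree sg t && (t x == a)) gibbs psi G t) *
  (\sum_(t | agree sg t && (t y == b)) gibbs psi G t).
Proof.
move=> hf; rewrite /Dn !big_distrlr /= !pair_big /=.
rewrite [RHS](reindex_inj Phi_inj) /= big_mkcond [RHS]big_mkcond; apply: eq_bigr => -[t1 t2] _ /=.
rewrite !agree_hyb hyb_x hyb_far //.
case A1: (agree sg t1); case A2: (agree sg t2); rewrite /= ?andbF //.
case: (t1 x == a); case: (t1 y == b) => //=.
apply: gibbs_hyb; by rewrite -(agree_trans _ _ A1).
Qed.

Lemma cond_marg_eq sg t w : agree sg t -> cond_marg psi G x l t w = cond_marg psi G x l sg w.
Proof.
move=> h; rewrite !cond_margE (Dn_eq _ _ h); congr (_ / _).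
by apply: eq_bigl => u; rewrite (agree_trans _ _ h).
Qed.

Lemma marg2_cond y a b : ~~ Defs.within G l.+1 (inl x) (inl y) ->
  marg2 psi G x y (a, b) =
  \sum_sg gibbs psi G sg * ((sg y == b)%:R * cond_marg psi G x l sg a).
Proof.
move=> hf; rewrite /marg2 /= big_mkcond lemmaA.
rewrite [RHS](lemmaA (fun sg => gibbs psi G sg * ((sg y == b)%:R * cond_marg psi G x l sg a))).
apply: eq_bigr => sg _; congr (_ * _).
rewrite -big_mkcondr /=.
under [RHS]eq_bigr => t ht do rewrite (cond_marg_eq _ _ _ ht) mulrCA mulrA.
rewrite -[in RHS]mulr_suml.
have Dn0 : Dn sg != 0 by apply/lt0r_neq0/Dn_gt0.
apply: (mulIf Dn0).
rewrite (eq_bigl (fun t => agree sg t && (t x == a) && (t y == b))); last by move=> t; rewrite andbA.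
rewrite factorize // cond_margE -mulrA mulfVK // mulrC; congr (_ * _).
rewrite [LHS]big_mkcondr /=; apply: eq_bigr => t _; by case: (t y == b); rewrite ?mul1r ?mul0r.
Qed.

Lemma sum_ind (c : Omega) : \sum_b ((c == b)%:R : R) = 1.
Proof.
rewrite (bigD1 c) //= eqxx big1 ?addr0 // => b hb.
by rewrite eq_sym (negbTE hb).
Qed.

Lemma margE z b : marg psi G z b = \sum_sg gibbs psi G sg * (sg z == b)%:R.
Proof.
rewrite /marg big_mkcond; apply: eq_bigr => sg _.
by case: (sg z == b); rewrite ?mulr1 ?mulr0.
Qed.

Lemma marg_ge0 z b : 0 <= marg psi G z b.
Proof. by apply: sumr_ge0 => sg _; apply: gibbs_ge0. Qed.

Lemma sum_marg z : \sum_b marg psi G z b = 1.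
Proof.
under eq_bigr do rewrite margE.
rewrite exchange_big /= -[RHS]sum_gibbs; apply: eq_bigr => sg _.
by rewrite -mulr_sumr sum_ind mulr1.
Qed.

Lemma avg_bound (h : config Omega M -> Omega -> R) :
  \sum_w `|\sum_sg gibbs psi G sg * h sg w| <= \sum_sg gibbs psi G sg * \sum_w `|h sg w|.
Proof.
under [X in _ <= X]eq_bigr do rewrite mulr_sumr.
rewrite [X in _ <= X]exchange_big /=.
apply: ler_sum => w _; apply: (le_trans (ler_norm_sum _ _ _)).
apply: ler_sum => sg _; by rewrite normrM ger0_norm ?gibbs_ge0.
Qed.

Variable (p : Omega -> R).
Definition err := \sum_sg gibbs psi G sg * tv (cond_marg psi G x l sg) p.

Lemma errE : err = 2^-1 * \sum_sg gibbs psi G sg * \sum_w `|cond_marg psi G x l sg w - p w|.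
Proof. by rewrite /err /tv mulr_sumr; apply: eq_bigr => sg _; rewrite mulrCA. Qed.

Lemma err_ge0 : 0 <= err.
Proof.
apply: sumr_ge0 => sg _; apply: mulr_ge0; first exact: gibbs_ge0.
by apply: mulr_ge0; [rewrite invr_ge0 | apply: sumr_ge0 => w _].
Qed.

Lemma marg_minus_p w : marg psi G x w - p w =
  \sum_sg gibbs psi G sg * (cond_marg psi G x l sg w - p w).
Proof.
rewrite (marg_cond w); under [RHS]eq_bigr do rewrite mulrBr.
by rewrite sumrB -mulr_suml sum_gibbs mul1r.
Qed.

Lemma tv_marg_le : tv (marg psi G x) p <= err.
Proof.
rewrite errE /tv ler_wpM2l ?invr_ge0 //.
under eq_bigr do rewrite marg_minus_p.
exact: avg_bound.
Qed.

Lemma tv_pair_far y : ~~ Defs.within G l.+1 (inl x) (inl y) ->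
  tv (marg2 psi G x y) (fun w => marg psi G x w.1 * marg psi G y w.2) <= 2 * err.
Proof.
move=> hf.
pose Dd sg a := cond_marg psi G x l sg a - p a.
have key a b : marg2 psi G x y (a, b) - marg psi G x a * marg psi G y b =
   \sum_sg gibbs psi G sg * ((sg y == b)%:R * Dd sg a) -
   marg psi G y b * \sum_sg gibbs psi G sg * Dd sg a.
  have e1 : \sum_sg gibbs psi G sg * ((sg y == b)%:R * Dd sg a) =
      marg2 psi G x y (a, b) - p a * marg psi G y b.
    rewrite marg2_cond // margE mulr_sumr -sumrB; apply: eq_bigr => sg _.
    rewrite /Dd; ring.
  rewrite e1 -(marg_minus_p a); ring.
rewrite /tv.
have -> : \sum_w `|marg2 psi G x y w - marg psi G x w.1 * marg psi G y w.2| =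
    \sum_a \sum_b `|marg2 psi G x y (a, b) - marg psi G x a * marg psi G y b|.
  by rewrite pair_bigA; apply: eq_bigr => -[a b].
have hb a : \sum_b `|marg2 psi G x y (a, b) - marg psi G x a * marg psi G y b|
     <= 2 * \sum_sg gibbs psi G sg * `|Dd sg a|.
  under eq_bigr do rewrite key.
  have C1 : `|\sum_sg gibbs psi G sg * Dd sg a| <= \sum_sg gibbs psi G sg * `|Dd sg a|.
    apply: (le_trans (ler_norm_sum _ _ _)); apply: ler_sum => sg _.
    by rewrite normrM ger0_norm ?gibbs_ge0.
  apply: (le_trans (y := \sum_b (`|\sum_sg gibbs psi G sg * ((sg y == b)%:R * Dd sg a)| +
        marg psi G y b * `|\sum_sg gibbs psi G sg * Dd sg a|))).
    apply: ler_sum => b _; apply: (le_trans (ler_normB _ _)).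
    by rewrite normrM ger0_norm ?marg_ge0.
  rewrite big_split /= -mulr_suml sum_marg mul1r mulr2n mulrDl mul1r.
  apply: lerD => //.
  apply: (le_trans (avg_bound (fun sg b => (sg y == b)%:R * Dd sg a))).
  apply: ler_sum => sg _; rewrite ler_wpM2l ?gibbs_ge0 //.
  under eq_bigr do rewrite normrM ger0_norm ?ler0n //.
  by rewrite -mulr_suml sum_ind mul1r.
rewrite errE mulrA mulfV ?mul1r; last by rewrite pnatr_eq0.
apply: (le_trans (y := 2^-1 * \sum_a (2 * \sum_sg gibbs psi G sg * `|Dd sg a|))).
  by rewrite ler_wpM2l ?invr_ge0 // ?ler_sum.
rewrite -mulr_sumr mulrA mulVf ?pnatr_eq0 // mul1r exchange_big /=.
by apply: ler_sum => sg _; rewrite mulr_sumr.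
Qed.

Lemma tv_le1 (T : finType) (P Q : T -> R) : (forall t, 0 <= P t) -> (forall t, 0 <= Q t) ->
  \sum_t P t = 1 -> \sum_t Q t = 1 -> tv P Q <= 1.
Proof.
move=> hP hQ sP sQ; rewrite /tv.
apply: (le_trans (y := 2^-1 * \sum_t (P t + Q t))).
  rewrite ler_wpM2l ?invr_ge0 //; apply: ler_sum => t _.
  by apply: (le_trans (ler_normB _ _)); rewrite !ger0_norm.
by rewrite big_split /= sP sQ mulVf // pnatr_eq0.
Qed.

Lemma sum_marg2 y : \sum_w marg2 psi G x y w = 1.
Proof.
rewrite -[RHS]sum_gibbs.
under eq_bigr do rewrite /marg2 big_mkcond.
rewrite exchange_big /=; apply: eq_bigr => sg _.
rewrite (bigD1 (sg x, sg y)) //= !eqxx /= big1 ?addr0 // => -[a b] /=.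
rewrite xpair_eqE => hne; case: ifP => // /andP [/eqP e1 /eqP e2].
by rewrite e1 e2 !eqxx in hne.
Qed.

Lemma tv_pair_le y :
  tv (marg2 psi G x y) (fun w => marg psi G x w.1 * marg psi G y w.2)
    <= (Defs.within G l.+1 (inl x) (inl y))%:R + 2 * err.
Proof.
case: (boolP (Defs.within G l.+1 (inl x) (inl y))) => h; last first.
  by rewrite add0r; exact: tv_pair_far.
apply: (le_trans (y := 1)); last by rewrite lerDl mulr_ge0 ?err_ge0.
apply: tv_le1.
- by move=> w; apply: sumr_ge0 => sg _; apply: gibbs_ge0.
- by move=> w; apply: mulr_ge0; apply: marg_ge0.
- exact: sum_marg2.
- rewrite -(pair_bigA _ (fun a b => marg psi G x a * marg psi G y b)) /=.
  by under eq_bigr do rewrite -mulr_sumr sum_marg mulr1; rewrite sum_marg.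
Qed.

End Cond.
End Gibbs1.

Local Open Scope classical_set_scope.
Local Open Scope ring_scope.

Lemma sum_ind_card (R : realType) (T : finType) (P : pred T) :
  \sum_t ((P t)%:R : R) = (#|P|)%:R.
Proof.
rewrite -sum1_card natr_sum [RHS]big_mkcond /=; apply: eq_bigr => t _. by rewrite unfold_in; case: (P t).
Qed.

Theorem lemma4p12 (R : realType) (Delta : nat) (Omega Theta PsiI : finType)
    (ar : PsiI -> nat) (psi : PsiI -> seq Omega -> R)
    (Ms : nat -> model Theta PsiI) (theta : probability (TT Theta PsiI) R)
    (pV : TT Theta PsiI -> Omega -> R) (pF : TT Theta PsiI -> seq Omega -> R) :
  (0 < Delta)%N -> (0 < #|Omega|)%N -> (0 < #|Theta|)%N ->
  psi_ok Delta ar psi ->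
  (forall n, model_ok Delta ar (Ms n) /\ nV (Ms n) = n) ->
  theta [set T | wf_templ Delta ar T] = 1%E ->
  high_girth psi Ms ->
  local_conv Ms theta ->
  marg_assign Delta ar psi pV pF ->
  forall eps : R, 0 < eps ->
  exists delta : R, 0 < delta /\
  forall l : nat, (0 < l)%N ->
  exists n0 : nat, forall n : nat, (n0 < n)%N ->
  forall G, G \in fgraphs (Ms n) ->
    (n%:R)^-1 * \sum_(x : 'I_(nV (Ms n)))
       \sum_(sg : config Omega (Ms n))
          gibbs psi G sg *
          tv (cond_marg psi G x l sg) (p_l theta pV l (nbhd G (inl x) l))
      < delta ^+ 9 ->
    symmetric2 psi G eps /\
    \sum_(x : 'I_(nV (Ms n))) tv (marg psi G x) (p_l theta pV l (nbhd G (inl x) l))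
      < eps * n%:R.
Proof.
move=> _ hOm _ [_ [hpsi _]] hMs _ _ _ _ eps heps.
set delta := eps / (eps + 4).
have hd0 : 0 < delta by rewrite divr_gt0 // ltr_wpDr.
have hd1 : delta <= eps / 4.
  rewrite /delta ler_pM2l // lef_pV2 ?posrE ?ltr_wpDr //; lra.
have hd2 : delta <= 1.
  rewrite /delta ler_pdivrMr ?ltr_wpDr //; lra.
have hd9 : delta ^+ 9 <= delta.
  by rewrite exprS -[X in _ <= X]mulr1 ler_wpM2l ?(ltW hd0) // exprn_ile1 ?(ltW hd0).
exists delta; split => // l hl.
set K := (Delta.+1 ^ l.+1)%N.
exists (Num.trunc (2 * K%:R / eps)) => n hn G hG H.
have [hM hnV] := hMs n.
set M := Ms n in hM hnV G hG H *.
have hn0 : (0 < n)%N by apply: leq_ltn_trans hn.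
have hnR : 0 < n%:R :> R by rewrite ltr0n.
set pp := fun x : 'I_(nV M) => p_l theta pV l (nbhd G (inl x) l).
set S := \sum_(x : 'I_(nV M)) @err R Omega Theta PsiI psi M G x l (pp x).
have hS : n%:R^-1 * S < delta ^+ 9 by [].
have hS0 : 0 <= S.
  apply: sumr_ge0 => x _; exact: (@err_ge0 _ _ _ _ _ _ _ _ _ hM hG hpsi hOm).
have hs : n%:R^-1 * S < eps / 4 by apply: (lt_le_trans hS); apply: (le_trans hd9).
have hNn : (nV M)%:R = n%:R :> R by rewrite hnV.
split.
- rewrite /symmetric2 hNn.
  have hK : 2 * K%:R / eps < n%:R.
    apply: (lt_le_trans (truncnS_gt _)); by rewrite ler_nat.
  rewrite ltr_pdivrMr // in hK.
  have hK2 : n%:R^-1 * K%:R < eps / 2.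
    rewrite mulrC ltr_pdivrMr //; lra.
  have hb : \sum_(x : 'I_(nV M)) \sum_(y : 'I_(nV M))
       tv (marg2 psi G x y) (fun w => marg psi G x w.1 * marg psi G y w.2)
     <= n%:R * K%:R + n%:R * (2 * S).
    apply: (le_trans (y := \sum_(x : 'I_(nV M)) (K%:R + n%:R * (2 * @err R Omega Theta PsiI psi M G x l (pp x))))).
      apply: ler_sum => x _.
      apply: (le_trans (y := \sum_(y : 'I_(nV M)) ((Defs.within G l.+1 (inl x) (inl y))%:R + 2 * @err R Omega Theta PsiI psi M G x l (pp x)))).
        apply: ler_sum => y _; exact: (@tv_pair_le _ _ _ _ _ _ _ _ _ hM hG hpsi hOm x l hl (pp x) y).
      rewrite big_split sumr_const card_ord -(mulr_natl (2 * _) (nV M)) hNn lerD2r.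
      rewrite sum_ind_card ler_nat.
      apply: (leq_trans _ (@card_ballV _ _ _ _ _ _ hM hG x l.+1)).
      by apply: subset_leq_card; apply/fintype.subsetP => y; rewrite inE.
    rewrite big_split sumr_const card_ord -(mulr_natl (K%:R) (nV M)) hNn lerD2l -mulr_sumr.
    rewrite ler_wpM2l ?ler0n // -mulr_sumr //.
  apply: (le_lt_trans (y := n%:R ^- 2 * (n%:R * K%:R + n%:R * (2 * S)))).
    by rewrite ler_wpM2l // invr_ge0 exprn_ge0 // ler0n.
  have -> : n%:R ^- 2 * (n%:R * K%:R + n%:R * (2 * S)) = n%:R^-1 * K%:R + 2 * (n%:R^-1 * S).
    by field; rewrite pnatr_eq0 -lt0n.
  lra.
- apply: (le_lt_trans (y := S)).
    apply: ler_sum => x _; exact: (@tv_marg_le _ _ _ _ _ _ _ _ _ hM hG hpsi hOm x l).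
  have hs' := hs; rewrite mulrC ltr_pdivrMr // in hs'.
  have hpos : 0 < eps * n%:R by rewrite mulr_gt0.
  lra.
Qed.
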